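(* Let $T$ be a left regular near-truss without an absorber. Then $\mathrm{Q}(T)$ is a brace-type near-truss; that is, for all $b\in T$, the retract of $\mathrm{Q}(T)$ at $\frac{b}{b}$, together with the multiplication of fractions $\frac{a}{b}\cdot\frac{a'}{b'}=\frac{\gamma a'}{\gamma' b}$ (where $\gamma,\gamma'\in T$ satisfy $\gamma b'=\gamma' a$), is a skew brace.
   Context: A heap is a set with a ternary operation $[-,-,-]$ satisfying $[a_1,a_2,[a_3,a_4,a_5]]=[[a_1,a_2,a_3],a_4,a_5]$ and $[a,a,b]=b=[b,a,a]$; its retract at $e$ is the group with operation $x+_ey=[x,e,y]$. A pre-truss is a heap with an associative multiplication; a near-truss additionally satisfies $a[b,c,d]=[ab,ac,ad]$. An absorber is $z$ with $tz=z=zt$ for all $t$. $T$ is a domain if for every $a\in T$ that is not an absorber and all $b\neq c$, $ab\neq ac$ and $ba\neq ca$; $T$ is left regular if it is a domain and for all non-absorbers $x,y$ there exist non-absorbers $r,s$ with $rx=sy$. $\mathrm{Q}(T)$ is the set of classes $\frac{a}{b}$ of pairs $(b,a)$, $b$ not an absorber, under $(b,a)\sim(b',a')$ iff $\beta b=\beta'b'$ and $\beta a=\beta'a'$ for some non-absorbers $\beta,\beta'$, with heap operation $\left[\frac{a}{b},\frac{a'}{b'},\frac{a''}{b''}\right]=\frac{[\beta_1a,\beta_2a',\beta_3a'']}{\beta_1b}$ for non-absorbers with $\beta_1b=\beta_2b'=\beta_3b''$, and the multiplication above; this is a well-defined near-truss. A near-truss is brace-type if its multiplication is a group. A skew brace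 is a triple $(B,+,\cdot)$ with $(B,+)$ and $(B,\cdot)$ groups and $a(b+c)=ab-a+ac$. *)

(* Defs.v *)
From Stdlib Require Import ClassicalEpsilon.

Set Implicit Arguments.

Section Defs.
Variable T : Type.
Variable hop : T -> T -> T -> T.
Variable mul : T -> T -> T.

Definition is_heap : Prop :=
  (forall a1 a2 a3 a4 a5,
      hop a1 a2 (hop a3 a4 a5) = hop (hop a1 a2 a3) a4 a5) /\
  (forall a b, hop a a b = b /\ hop b a a = b).

Definition is_pre_truss : Prop :=
  is_heap /\ forall a b c, mul a (mul b c) = mul (mul a b) c.

Definition is_near_truss : Prop :=
  is_pre_truss /\
  forall a b c d, mul a (hop b c d) = hop (mul a b) (mul a c) (mul a d).

Definition absorber (z : T) : Prop := forall t, mul t z = z /\ mul z t = z.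

Definition is_domain : Prop :=
  forall a, ~ absorber a -> forall b c, b <> c ->
    mul a b <> mul a c /\ mul b a <> mul c a.

Definition left_regular : Prop :=
  is_domain /\
  forall x y, ~ absorber x -> ~ absorber y ->
    exists r s, ~ absorber r /\ ~ absorber s /\ mul r x = mul s y.

(* A pair (b, a) with b not an absorber stands for the fraction a/b. *)
Definition frac_rel (p q : T * T) : Prop :=
  exists beta beta', ~ absorber beta /\ ~ absorber beta' /\
    mul beta (fst p) = mul beta' (fst q) /\ mul beta (snd p) = mul beta' (snd q).

Definition Q : Type :=
  { S : T * T -> Prop | exists p, ~ absorber (fst p) /\ S = frac_rel p }.

Definition frac (b a : T) : (T * T -> Prop) := frac_rel (b, a).

Definition to_Q (S : T * T -> Prop) (dflt : Q) : Q :=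
  match excluded_middle_informative
          (exists p, ~ absorber (fst p) /\ S = frac_rel p) with
  | left h => exist _ S h
  | right _ => dflt
  end.

(* Heap operation on fractions:
   [a/b, a'/b', a''/b''] = [beta1 a, beta2 a', beta3 a''] / (beta1 b)
   for non-absorbers with beta1 b = beta2 b' = beta3 b''. *)
Definition Q_hop_set (X Y Z : Q) : T * T -> Prop := fun p =>
  exists x y z beta1 beta2 beta3,
    proj1_sig X x /\ proj1_sig Y y /\ proj1_sig Z z /\
    ~ absorber beta1 /\ ~ absorber beta2 /\ ~ absorber beta3 /\
    mul beta1 (fst x) = mul beta2 (fst y) /\
    mul beta2 (fst y) = mul beta3 (fst z) /\
    frac_rel (mul beta1 (fst x),
              hop (mul beta1 (snd x)) (mul beta2 (snd y)) (mul beta3 (snd z))) p.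

Definition Q_hop (X Y Z : Q) : Q := to_Q (Q_hop_set X Y Z) X.

(* Multiplication of fractions:
   (a/b) (a'/b') = (gamma a') / (gamma' b) where gamma b' = gamma' a. *)
Definition Q_mul_set (X Y : Q) : T * T -> Prop := fun p =>
  exists x y gamma gamma',
    proj1_sig X x /\ proj1_sig Y y /\
    mul gamma (fst y) = mul gamma' (snd x) /\
    frac_rel (mul gamma' (fst x), mul gamma (snd y)) p.

Definition Q_mul (X Y : Q) : Q := to_Q (Q_mul_set X Y) X.

Definition Q_of (b a : T) (hb : ~ absorber b) : Q :=
  exist _ (frac_rel (b, a)) (ex_intro _ (b, a) (conj hb eq_refl)).

End Defs.

Definition is_group (G : Type) (op : G -> G -> G) (e : G) (inv : G -> G) : Prop :=
  (forall x y z, op x (op y z) = op (op x y) z) /\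
  (forall x, op e x = x /\ op x e = x) /\
  (forall x, op (inv x) x = e /\ op x (inv x) = e).

Definition is_skew_brace (B : Type) (add mul : B -> B -> B) : Prop :=
  exists (z : B) (neg : B -> B) (one : B) (inv : B -> B),
    is_group add z neg /\ is_group mul one inv /\
    forall a b c, mul a (add b c) = add (add (mul a b) (neg a)) (mul a c).

(* Main.v *)
Require Import Defs.
From Stdlib Require Import Classical FunctionalExtensionality PropExtensionality ProofIrrelevance ClassicalEpsilon.

Definition good {T} (hop : T -> T -> T -> T) (mul : T -> T -> T) : Prop :=
  is_near_truss hop mul /\ left_regular mul /\ forall z, ~ absorber mul z.

Lemma g_na {T hop} {mul : T -> T -> T} (G : good hop mul) z : ~ absorber mul z.
Proof. apply G. Qed.
Lemma g_A {T hop} {mul : T -> T -> T} (G : good hop mul) a b c :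
  mul a (mul b c) = mul (mul a b) c.
Proof. apply G. Qed.
Lemma g_dist {T hop} {mul : T -> T -> T} (G : good hop mul) a b c d :
  mul a (hop b c d) = hop (mul a b) (mul a c) (mul a d).
Proof. apply G. Qed.
Lemma g_hA {T hop} {mul : T -> T -> T} (G : good hop mul) a1 a2 a3 a4 a5 :
  hop a1 a2 (hop a3 a4 a5) = hop (hop a1 a2 a3) a4 a5.
Proof. apply G. Qed.
Lemma g_h1 {T hop} {mul : T -> T -> T} (G : good hop mul) a b : hop a a b = b.
Proof. apply G. Qed.
Lemma g_h2 {T hop} {mul : T -> T -> T} (G : good hop mul) a b : hop b a a = b.
Proof. apply G. Qed.
Lemma g_lc {T hop} {mul : T -> T -> T} (G : good hop mul) a b c :
  mul a b = mul a c -> b = c.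
Proof.
  intro E. destruct (classic (b = c)) as [|H]; auto. exfalso.
  destruct G as [_ [[D _] NA]]. exact (proj1 (D a (NA a) b c H) E).
Qed.
Lemma g_rc {T hop} {mul : T -> T -> T} (G : good hop mul) a b c :
  mul b a = mul c a -> b = c.
Proof.
  intro E. destruct (classic (b = c)) as [|H]; auto. exfalso.
  destruct G as [_ [[D _] NA]]. exact (proj2 (D a (NA a) b c H) E).
Qed.
Lemma g_ore {T hop} {mul : T -> T -> T} (G : good hop mul) x y :
  exists r s, mul r x = mul s y.
Proof.
  destruct G as [_ [[_ O] NA]]. destruct (O x y (NA x) (NA y)) as [r [s [_ [_ E]]]].
  eauto.
Qed.

Definition cls {T hop} {mul : T -> T -> T} (G : good hop mul) (b a : T) : Q mul :=
  @Q_of T mul b a (g_na G b).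

Lemma fr_intro {T hop} {mul : T -> T -> T} (G : good hop mul) b a b' a' c c' :
  mul c b = mul c' b' -> mul c a = mul c' a' -> frac_rel mul (b, a) (b', a').
Proof. intros. exists c, c'. repeat split; auto; apply (g_na G). Qed.

Lemma keyL {T hop} {mul : T -> T -> T} (G : good hop mul) b a b' a' c c' :
  frac_rel mul (b, a) (b', a') -> mul c b = mul c' b' -> mul c a = mul c' a'.
Proof.
  intros [m [m' [_ [_ [E1 E2]]]]] E. simpl in *.
  destruct (g_ore G c m) as [u [v Huv]].
  assert (mul u c' = mul v m').
  { apply (g_rc G b').
    rewrite <- !(g_A G), <- E1, <- E, !(g_A G), Huv. reflexivity. }
  apply (g_lc G u). rewrite !(g_A G), Huv, H, <- !(g_A G), E2. reflexivity.
Qed.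

Lemma fr_refl {T hop} {mul : T -> T -> T} (G : good hop mul) p : frac_rel mul p p.
Proof. destruct p as [b a]. apply (fr_intro G) with b b; auto. Qed.
Lemma fr_sym {T hop} {mul : T -> T -> T} (G : good hop mul) p q :
  frac_rel mul p q -> frac_rel mul q p.
Proof. intros [c [c' [H1 [H2 [H3 H4]]]]]. exists c', c. auto. Qed.
Lemma fr_trans {T hop} {mul : T -> T -> T} (G : good hop mul) p q r :
  frac_rel mul p q -> frac_rel mul q r -> frac_rel mul p r.
Proof.
  destruct p as [b a], q as [b' a'], r as [b'' a''].
  intros H1 [m [m' [_ [_ [E1 E2]]]]]; simpl in *.
  destruct H1 as [c [c' [_ [_ [F1 F2]]]]]; simpl in *.
  destruct (g_ore G c' m) as [u [v Huv]].
  apply (fr_intro G) with (mul u c) (mul v m').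
  - rewrite <- !(g_A G), F1, <- E1, !(g_A G), Huv. reflexivity.
  - rewrite <- !(g_A G), F2, <- E2, !(g_A G), Huv. reflexivity.
Qed.
Lemma fr_scale {T hop} {mul : T -> T -> T} (G : good hop mul) b a t :
  frac_rel mul (b, a) (mul t b, mul t a).
Proof. apply (fr_intro G) with (mul b t) b; symmetry; apply (g_A G). Qed.

Lemma sig_eq {T} {mul : T -> T -> T} (X Y : Q mul) :
  proj1_sig X = proj1_sig Y -> X = Y.
Proof.
  destruct X as [x hx], Y as [y hy]; simpl; intros; subst. f_equal. apply proof_irrelevance.
Qed.

Lemma cls_eq {T hop} {mul : T -> T -> T} (G : good hop mul) b a b' a' :
  frac_rel mul (b, a) (b', a') -> cls G b a = cls G b' a'.
Proof.
  intro H. apply sig_eq. simpl. apply functional_extensionality. intro q.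
  apply propositional_extensionality. split; intro K.
  - eapply (fr_trans G); [apply (fr_sym G); exact H| exact K].
  - eapply (fr_trans G); [exact H| exact K].
Qed.

Lemma scale {T hop} {mul : T -> T -> T} (G : good hop mul) b a t :
  cls G b a = cls G (mul t b) (mul t a).
Proof. apply cls_eq, (fr_scale G). Qed.

Lemma Q_rep {T hop} {mul : T -> T -> T} (G : good hop mul) (X : Q mul) :
  exists b a, X = cls G b a.
Proof.
  destruct X as [S [[b a] [Hp HS]]]. exists b, a. apply sig_eq. simpl. exact HS.
Qed.

Lemma to_Q_eq {T hop} {mul : T -> T -> T} (G : good hop mul) S d b a :
  S = frac_rel mul (b, a) -> to_Q S d = cls G b a.
Proof.
  intro HS. unfold to_Q. destruct excluded_middle_informative as [h|n].
  - apply sig_eq. simpl. exact HS.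
  - exfalso. apply n. exists (b, a). split; [apply (g_na G)| exact HS].
Qed.

Lemma WDh {T hop} {mul : T -> T -> T} (G : good hop mul) b1 a1 b2 a2 b3 a3
  x1 x2 y1 y2 z1 z2 be1 be2 be3 g1 g2 g3 :
  frac_rel mul (b1, a1) (x1, x2) -> frac_rel mul (b2, a2) (y1, y2) ->
  frac_rel mul (b3, a3) (z1, z2) ->
  mul be1 b1 = mul be2 b2 -> mul be2 b2 = mul be3 b3 ->
  mul g1 x1 = mul g2 y1 -> mul g2 y1 = mul g3 z1 ->
  frac_rel mul (mul be1 b1, hop (mul be1 a1) (mul be2 a2) (mul be3 a3))
               (mul g1 x1, hop (mul g1 x2) (mul g2 y2) (mul g3 z2)).
Proof.
  intros Hx Hy Hz E1 E2 F1 F2.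
  destruct (g_ore G (mul be1 b1) (mul g1 x1)) as [e [e' He]].
  assert (K1 : mul (mul e be1) a1 = mul (mul e' g1) x2).
  { apply (keyL G _ _ _ _ _ _ Hx). rewrite <- !(g_A G). exact He. }
  assert (K2 : mul (mul e be2) a2 = mul (mul e' g2) y2).
  { apply (keyL G _ _ _ _ _ _ Hy). rewrite <- !(g_A G), <- E1, <- F1. exact He. }
  assert (K3 : mul (mul e be3) a3 = mul (mul e' g3) z2).
  { apply (keyL G _ _ _ _ _ _ Hz). rewrite <- !(g_A G), <- E2, <- E1, <- F2, <- F1. exact He. }
  apply (fr_intro G) with e e'; auto.
  rewrite !(g_dist G), !(g_A G), K1, K2, K3. reflexivity.
Qed.

Lemma hop_eq {T hop} {mul : T -> T -> T} (G : good hop mul) b a b' a' b'' a'' be1 be2 be3 :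
  mul be1 b = mul be2 b' -> mul be2 b' = mul be3 b'' ->
  Q_hop hop (cls G b a) (cls G b' a') (cls G b'' a'') =
  cls G (mul be1 b) (hop (mul be1 a) (mul be2 a') (mul be3 a'')).
Proof.
  intros E1 E2. unfold Q_hop. apply (to_Q_eq G).
  apply functional_extensionality. intro q. apply propositional_extensionality. split.
  - intros [[x1 x2] [[y1 y2] [[z1 z2] [g1 [g2 [g3 [Hx [Hy [Hz [_ [_ [_ [F1 [F2 R]]]]]]]]]]]]]].
    simpl in *. eapply (fr_trans G); [|exact R]. apply (WDh G) with (b2 := b') (b3 := b'') (y1 := y1) (z1 := z1); auto.
  - intro R. exists (b, a), (b', a'), (b'', a''), be1, be2, be3.
    simpl. repeat split; try apply (fr_refl G); try apply (g_na G); auto.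
Qed.

Lemma WDm {T hop} {mul : T -> T -> T} (G : good hop mul) b a b' a' x1 x2 y1 y2 g g' d d' :
  frac_rel mul (b, a) (x1, x2) -> frac_rel mul (b', a') (y1, y2) ->
  mul g b' = mul g' a -> mul d y1 = mul d' x2 ->
  frac_rel mul (mul g' b, mul g a') (mul d' x1, mul d y2).
Proof.
  intros Hx Hy E F.
  destruct (g_ore G (mul g' b) (mul d' x1)) as [e [e' He]].
  assert (K1 : mul (mul e g') a = mul (mul e' d') x2).
  { apply (keyL G _ _ _ _ _ _ Hx). rewrite <- !(g_A G). exact He. }
  assert (K2 : mul (mul e g) a' = mul (mul e' d) y2).
  { apply (keyL G _ _ _ _ _ _ Hy). rewrite <- !(g_A G), E, F, !(g_A G). exact K1. }
  apply (fr_intro G) with e e'; auto. rewrite !(g_A G); auto.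
Qed.

Lemma mul_eq {T hop} {mul : T -> T -> T} (G : good hop mul) b a b' a' g g' :
  mul g b' = mul g' a ->
  Q_mul (cls G b a) (cls G b' a') = cls G (mul g' b) (mul g a').
Proof.
  intros E. unfold Q_mul. apply (to_Q_eq G).
  apply functional_extensionality. intro q. apply propositional_extensionality. split.
  - intros [[x1 x2] [[y1 y2] [d [d' [Hx [Hy [F R]]]]]]].
    simpl in *. eapply (fr_trans G); [|exact R]. apply (WDm G) with (a := a) (b' := b') (x2 := x2) (y1 := y1); auto.
  - intro R. exists (b, a), (b', a'), g, g'.
    simpl. repeat split; try apply (fr_refl G); auto.
Qed.

Lemma add1 {T hop} {mul : T -> T -> T} (G : good hop mul) D (X : Q mul) :
  exists t a, X = cls G (mul t D) a.
Proof.
  destruct (Q_rep G X) as [b [a ->]]. destruct (g_ore G b D) as [r [s E]].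
  exists s, (mul r a). rewrite <- E. apply (scale G).
Qed.

Lemma hop_same {T hop} {mul : T -> T -> T} (G : good hop mul) D a a' a'' :
  Q_hop hop (cls G D a) (cls G D a') (cls G D a'') = cls G D (hop a a' a'').
Proof.
  rewrite (hop_eq G D a D a' D a'' D D D); auto.
  rewrite <- (g_dist G), <- (scale G). reflexivity.
Qed.

Ltac start G X D :=
  let a := fresh "a" in destruct (Q_rep G X) as [D [a ->]].
Ltac more G X D :=
  let t := fresh "t" in let a := fresh "a" in
  destruct (add1 G D X) as [t [a ->]];
  repeat match goal with
  | |- context [cls G D ?x] => rewrite (scale G D x t)
  end;
  match goal with |- context [cls G (?f t D) _] => generalize (f t D) end;
  clear D; intro D.

Lemma QhA {T hop} {mul : T -> T -> T} (G : good hop mul) (X1 X2 X3 X4 X5 : Q mul) :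
  Q_hop hop X1 X2 (Q_hop hop X3 X4 X5) = Q_hop hop (Q_hop hop X1 X2 X3) X4 X5.
Proof.
  start G X1 D. more G X2 D. more G X3 D. more G X4 D. more G X5 D.
  rewrite !(hop_same G). rewrite (g_hA G). reflexivity.
Qed.

Lemma Qh1 {T hop} {mul : T -> T -> T} (G : good hop mul) (X Y : Q mul) :
  Q_hop hop X X Y = Y.
Proof.
  start G X D. more G Y D. rewrite (hop_same G), (g_h1 G). reflexivity.
Qed.

Lemma Qh2 {T hop} {mul : T -> T -> T} (G : good hop mul) (X Y : Q mul) :
  Q_hop hop Y X X = Y.
Proof.
  start G X D. more G Y D. rewrite (hop_same G), (g_h2 G). reflexivity.
Qed.

Lemma QmA {T hop} {mul : T -> T -> T} (G : good hop mul) (X Y Z : Q mul) :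
  Q_mul X (Q_mul Y Z) = Q_mul (Q_mul X Y) Z.
Proof.
  destruct (Q_rep G X) as [b [a ->]].
  destruct (Q_rep G Y) as [b' [a' ->]].
  destruct (Q_rep G Z) as [b'' [a'' ->]].
  destruct (g_ore G b'' a') as [r [r' Er]].
  destruct (g_ore G (mul r' b') a) as [s [s' Es]].
  rewrite (mul_eq G b' a' b'' a'' r r' Er).
  rewrite (mul_eq G b a (mul r' b') (mul r a'') s s' Es).
  rewrite (mul_eq G b a b' a' (mul s r') s'); [| rewrite <- (g_A G); exact Es].
  rewrite (mul_eq G (mul s' b) (mul (mul s r') a') b'' a'' (mul b (mul s r)) b).
  - rewrite (scale G (mul s' b) (mul s (mul r a'')) b), !(g_A G). reflexivity.
  - rewrite <- !(g_A G), Er. reflexivity.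
Qed.

Lemma Qm1l {T hop} {mul : T -> T -> T} (G : good hop mul) c (X : Q mul) :
  Q_mul (cls G c c) X = X.
Proof.
  destruct (Q_rep G X) as [b [a ->]].
  destruct (g_ore G b c) as [g [g' E]].
  rewrite (mul_eq G c c b a g g' E), <- E, <- (scale G). reflexivity.
Qed.

Lemma Qm1r {T hop} {mul : T -> T -> T} (G : good hop mul) c (X : Q mul) :
  Q_mul X (cls G c c) = X.
Proof.
  destruct (Q_rep G X) as [b [a ->]].
  destruct (g_ore G c a) as [g [g' E]].
  rewrite (mul_eq G b a c c g g' E), E, <- (scale G). reflexivity.
Qed.

Definition Qinv {T} {mul : T -> T -> T} (X : Q mul) : Q mul :=
  to_Q (fun p => proj1_sig X (snd p, fst p)) X.

Lemma inv_cls {T hop} {mul : T -> T -> T} (G : good hop mul) b a :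
  Qinv (cls G b a) = cls G a b.
Proof.
  unfold Qinv. apply (to_Q_eq G). apply functional_extensionality. intros [q1 q2].
  apply propositional_extensionality. simpl. unfold frac_rel. simpl.
  split; intros [c [c' [h1 [h2 [h3 h4]]]]]; exists c, c'; auto.
Qed.

Lemma diag {T hop} {mul : T -> T -> T} (G : good hop mul) a c :
  cls G a a = cls G c c.
Proof.
  destruct (g_ore G a c) as [r [s E]]. apply (cls_eq G). apply (fr_intro G) with r s; auto.
Qed.

Lemma Qinvl {T hop} {mul : T -> T -> T} (G : good hop mul) c (X : Q mul) :
  Q_mul (Qinv X) X = cls G c c.
Proof.
  destruct (Q_rep G X) as [b [a ->]]. rewrite (inv_cls G).
  rewrite (mul_eq G a b b a c c eq_refl). apply (diag G).
Qed.

Lemma Qinvr {T hop} {mul : T -> T -> T} (G : good hop mul) c (X : Q mul) :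
  Q_mul X (Qinv X) = cls G c c.
Proof.
  destruct (Q_rep G X) as [b [a ->]]. rewrite (inv_cls G).
  rewrite (mul_eq G b a a b c c eq_refl). apply (diag G).
Qed.

Lemma Qdist {T hop} {mul : T -> T -> T} (G : good hop mul) (X Y Z W : Q mul) :
  Q_mul X (Q_hop hop Y Z W) = Q_hop hop (Q_mul X Y) (Q_mul X Z) (Q_mul X W).
Proof.
  start G Y D. more G Z D. more G W D.
  destruct (Q_rep G X) as [b [a9 ->]].
  destruct (g_ore G D a9) as [g [g' E]].
  rewrite (hop_same G), !(mul_eq G b a9 D _ g g' E), (hop_same G), (g_dist G).
  reflexivity.
Qed.

Theorem corollary5p5 (T : Type) (hop : T -> T -> T -> T) (mul : T -> T -> T)
  (HT : is_near_truss hop mul) (Hreg : left_regular mul)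
  (Hnoabs : forall z : T, ~ absorber mul z) :
  forall b : T,
    is_skew_brace
      (fun X Y : Q mul => @Q_hop T hop mul X (@Q_of T mul b b (Hnoabs b)) Y)
      (@Q_mul T mul).
Proof.
  intro b.
  assert (G : good hop mul) by (split; [|split]; assumption).
  replace (@Q_of T mul b b (Hnoabs b)) with (cls G b b) by (apply sig_eq; reflexivity).
  set (e := cls G b b).
  exists e, (fun X => Q_hop hop e X e), e, Qinv.
  split; [|split].
  - split; [|split].
    + intros. apply (QhA G).
    + intros. split; [apply (Qh1 G)| apply (Qh2 G)].
    + intros x. split.
      * rewrite <- (QhA G), (Qh1 G), (Qh2 G). reflexivity.
      * rewrite (QhA G), (Qh2 G), (Qh1 G). reflexivity.
  - split; [|split].
    + intros. apply (QmA G).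
    + intros. split; [apply (Qm1l G)| apply (Qm1r G)].
    + intros. split; [apply (Qinvl G)| apply (Qinvr G)].
  - intros x y z. rewrite (Qdist G). unfold e. rewrite (Qm1r G). fold e.
    rewrite (QhA G), (Qh2 G), <- (QhA G), (Qh1 G). reflexivity.
Qed.
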